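(* Let $R$ be a D-regularly nil clean ring and let $e\in R$ be an idempotent. Then the corner ring $eRe$ (with identity $e$) is D-regularly nil clean. In particular, if for some positive integer $n$ the matrix ring $\mathbb{M}_n(R)$ is D-regularly nil clean, then $R$ is D-regularly nil clean.
   Context: All rings are associative with identity $1\neq 0$. $Id(R)$ denotes the set of idempotents, $Nil(R)$ the set of nilpotent elements. A ring $R$ is called D-regularly nil clean if for each $a\in R$ there exists an idempotent $e\in aRa\cap Id(R)$ such that $a(1-e)\in Nil(R)$. *)

(* Defs.v *)
From HB Require Import structures.
From mathcomp Require Import all_boot all_order all_algebra.
Set Implicit Arguments. Unset Strict Implicit. Unset Printing Implicit Defensive.
Import GRing.Theory.
Local Open Scope ring_scope.

Definition is_nilpotent (R : nzRingType) (x : R) : Prop := exists k : nat, x ^+ k = 0.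

Definition is_idempotent (R : nzRingType) (e : R) : Prop := e * e = e.

Definition D_regularly_nil_clean (R : nzRingType) : Prop :=
  forall a : R, exists e : R,
    (exists x : R, e = a * x * a) /\ is_idempotent e /\ is_nilpotent (a * (1 - e)).

(* The corner ring eRe (identity e) is D-regularly nil clean, written out
   inside R: elements of eRe are the y with y = e*y*e; the identity of eRe is e;
   a(eRe)a = { a*x*a | x in eRe }; multiplication/powers (positive exponents)
   agree with those of R. *)
Definition corner_D_regularly_nil_clean (R : nzRingType) (e : R) : Prop :=
  forall a : R, a = e * a * e -> exists f : R,
    (exists x : R, x = e * x * e /\ f = a * x * a) /\ is_idempotent f /\
    is_nilpotent (a * (e - f)).

(* Main.v *)
Require Import Defs.
From HB Require Import structures.
From mathcomp Require Import all_boot all_order all_algebra.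
Local Open Scope ring_scope.
Import GRing.Theory.

Section Aux.
Variables (R : nzRingType) (n : nat).
Implicit Types P M : 'M[R]_n.+1.

Lemma col0 P M : (forall j : 'I_n.+1, j != 0 -> M j 0 = 0) ->
  (P * M) 0 0 = P 0 0 * M 0 0.
Proof.
move=> H; rewrite -mulmxE mxE (bigD1 ord0) //= big1 ?addr0 // => j Hj.
by rewrite H ?mulr0.
Qed.

Lemma row0 P M : (forall j : 'I_n.+1, j != 0 -> P 0 j = 0) ->
  (P * M) 0 0 = P 0 0 * M 0 0.
Proof.
move=> H; rewrite -mulmxE mxE (bigD1 ord0) //= big1 ?addr0 // => j Hj.
by rewrite H ?mul0r.
Qed.

Lemma rowz P M (j i : 'I_n.+1) : (forall k, P j k = 0) -> (P * M) j i = 0.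
Proof.
move=> H; rewrite -mulmxE mxE big1 // => k _; by rewrite H mul0r.
Qed.

Lemma pow00 M k : (forall j : 'I_n.+1, j != 0 -> M j 0 = 0) ->
  (M ^+ k) 0 0 = (M 0 0) ^+ k.
Proof.
move=> H; elim: k => [|k IH]; first by rewrite !expr0 mxE.
by rewrite !exprSr col0 // IH.
Qed.
End Aux.

Theorem proposition2p3 :
  (forall (R : nzRingType) (e : R),
      D_regularly_nil_clean R -> is_idempotent e -> corner_D_regularly_nil_clean e) /\
  (forall (R : nzRingType) (n : nat),
      D_regularly_nil_clean ('M[R]_n.+1 : nzRingType) -> D_regularly_nil_clean R).
Proof.
split.
  move=> R e HR He a Ha.
  have ae : a * e = a by rewrite [in LHS]Ha -mulrA He -Ha.
  have ea : e * a = a by rewrite [in LHS]Ha !mulrA He -Ha.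
  have [g [[x gx] [Hg [k Hk]]]] := HR a.
  exists g; split.
    exists (e * x * e); split; first by rewrite !mulrA He -!mulrA He.
    by rewrite gx !mulrA ae -!mulrA ea.
  split => //; exists k.
  by rewrite mulrBr ae -Hk mulrBr mulr1.
move=> R n HM a.
pose A : 'M[R]_n.+1 := \matrix_(i, j) (if (i == 0) && (j == 0) then a else 0).
have Arow : forall j : 'I_n.+1, j != 0 -> forall k, A j k = 0.
  by move=> j Hj k; rewrite mxE (negbTE Hj).
have A0 : forall j : 'I_n.+1, j != 0 -> A 0 j = 0.
  by move=> j Hj; rewrite mxE (negbTE Hj) andbF.
have A00 : A 0 0 = a by rewrite mxE.
have [E [[X EX] [HE [k Hk]]]] := HM A.
have Ecol : forall j : 'I_n.+1, j != 0 -> E j 0 = 0.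
  move=> j Hj; rewrite EX; apply: rowz => i; apply: rowz; exact: Arow.
exists (E 0 0); split.
  exists (X 0 0); rewrite EX col0; last by move=> j Hj; apply: Arow.
  by rewrite row0 // A00.
split.
  by rewrite /is_idempotent -{3}HE col0.
exists k.
have Ncol : forall j : 'I_n.+1, j != 0 -> (A * (1 - E)) j 0 = 0.
  by move=> j Hj; apply: rowz; exact: Arow.
have := congr1 (fun M : 'M[R]_n.+1 => M 0 0) Hk => /=.
rewrite pow00 // row0 // A00 !mxE /=.
by rewrite mulr1n.
Qed.
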